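(* Let $f_{SN_2}(x)=\sqrt{\frac{x^2+1}{2}}-\left(\frac{\sqrt x+1}{2}\right)\sqrt{\frac{x+1}{2}}$ for $x\in(0,\infty)$, let $f_{SN_2}^*(u)=u\,f_{SN_2}\!\left(\frac{1-u}{u}\right)$ for $u\in(0,1)$, extended by continuity to $[0,1]$ (explicitly $f_{SN_2}^*(u)=\frac{\sqrt2}{4}\left(2\sqrt{u^2+(1-u)^2}-\sqrt u-\sqrt{1-u}\right)$), and define $\overline M_{SN_2}(C_1,C_2)=E_X\{f_{SN_2}^*(P(C_2\mid x))\}$. Then $$P_e\le \frac12\left[1-\frac{4}{\sqrt2}\,\overline M_{SN_2}(C_1,C_2)\right].$$
   Context: Two-class decision problem: classes $C_1,C_2$, an observation $x$ in a space $\mathrm X$ with density $p(x)$, and a posteriori probabilities $P(C_1\mid x),P(C_2\mid x)\ge0$ with $P(C_1\mid x)+P(C_2\mid x)=1$. $E_X\{g(x)\}=\int_{\mathrm X} g(x)p(x)\,dx$. $P_e=E_X\{\min(P(C_1\mid x),P(C_2\mid x))\}$ is the Bayesian probability of error. *)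

(* Defs.v *)
From mathcomp Require Import all_boot all_order all_algebra.
From mathcomp Require Import all_classical all_reals all_analysis.
Set Implicit Arguments. Unset Strict Implicit. Unset Printing Implicit Defensive.
Import Order.TTheory GRing.Theory Num.Theory.
Local Open Scope ring_scope.

Definition fSN2 {R : realType} (x : R) : R :=
  Num.sqrt ((x ^+ 2 + 1) / 2) - ((Num.sqrt x + 1) / 2) * Num.sqrt ((x + 1) / 2).

(* f*_{SN_2}(u) = u f_{SN_2}((1-u)/u) on (0,1), extended by continuity to [0,1];
   at the endpoints we use the paper's explicit closed form (= the limits). *)
Definition fSN2star {R : realType} (u : R) : R :=
  if (0 < u) && (u < 1) then u * fSN2 ((1 - u) / u)
  else Num.sqrt 2 / 4 *
       (2 * Num.sqrt (u ^+ 2 + (1 - u) ^+ 2) - Num.sqrt u - Num.sqrt (1 - u)).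

Definition EX {d} {T : measurableType d} {R : realType}
  (mu : {measure set T -> \bar R}) (p : T -> R) (g : T -> R) : \bar R :=
  (\int[mu]_x (g x * p x)%:E)%E.

(* Main.v *)
Require Import Defs.
From mathcomp Require Import all_boot all_order all_algebra.
From mathcomp Require Import all_classical all_reals all_analysis measurable_realfun.
From mathcomp Require Import ring lra.
Set Implicit Arguments. Unset Strict Implicit. Unset Printing Implicit Defensive.
Import Order.TTheory GRing.Theory Num.Theory.
Local Open Scope ring_scope.

Lemma key_ab (R : realType) (a b : R) : 0 <= a -> a <= b -> a^+2 + b^+2 = 1 ->
  4 * (a^+4 + b^+4) <= ((a+b)*(1+b-a))^+2.
Proof.
move=> a0 ab h.
set c := b - a. set s := a + b.
have c0 : 0 <= c by rewrite /c subr_ge0.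
have hs : s^+2 + c^+2 = 2 by rewrite /s /c; nra.
have c1 : c <= 1.
  have hab : 0 <= a * b by apply: mulr_ge0; lra.
  have hs2 : s^+2 = 1 + 2 * (a * b) by rewrite /s; rewrite (_ : (a+b)^+2 = a^+2+b^+2+2*(a*b)); [lra|ring].
  have : c^+2 <= 1 by lra.
  nra.
have hp : 0 <= c * (1 - c) * (4 + c - c^+2).
  apply: mulr_ge0; first (apply: mulr_ge0; lra). nra.
have e1 : a^+4 + b^+4 = ((a^+2+b^+2)^+2 + s^+2 * c^+2)/2 by rewrite /s /c; field.
rewrite h expr1n in e1.
rewrite e1 -/s. rewrite (_ : 1 + b - a = 1 + c); last by rewrite /c; ring.
rewrite exprMn.
have -> : s^+2 = 2 - c^+2 by lra.
nra.
Qed.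

Definition hcl (R : realType) (u : R) : R :=
  2 * Num.sqrt (u^+2 + (1-u)^+2) - Num.sqrt u - Num.sqrt (1-u).

Lemma half_ineq (R : realType) (u : R) : 0 <= u -> u <= 1 - u -> u <= (1 - hcl u)/2.
Proof.
move=> u0 uh; rewrite /hcl.
set a := Num.sqrt u; set b := Num.sqrt (1-u).
have ha : a^+2 = u by rewrite /a sqr_sqrtr.
have hb : b^+2 = 1 - u by rewrite /b sqr_sqrtr // ; lra.
have a0 : 0 <= a by exact: sqrtr_ge0.
have ab : a <= b by exact: ler_wsqrtr.
have habh : a^+2 + b^+2 = 1 by rewrite ha hb; ring.
have K := key_ab a0 ab habh.
set X := (a+b)*(1+b-a).
have X0 : 0 <= X by rewrite /X; apply: mulr_ge0; lra.
have eX : X = a + b + 1 - 2 * u by rewrite /X (_ : (a+b)*(1+b-a) = a+b+b^+2-a^+2); [lra|ring].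
have ew : u^+2 + (1-u)^+2 = a^+4 + b^+4.
  have e4 : forall x : R, x^+4 = (x^+2)^+2 by move=> x; rewrite -exprM.
  by rewrite !e4 ha hb.
have hw : Num.sqrt (u^+2 + (1-u)^+2) <= X/2.
  rewrite ew -[X/2]ger0_norm; last lra.
  rewrite -sqrtr_sqr; apply: ler_wsqrtr.
  have -> : (X/2)^+2 = X^+2/4 by field.
  rewrite -/X in K; lra.
lra.
Qed.

Lemma pt_ineq (R : realType) (u : R) : 0 <= u <= 1 -> Num.min (1 - u) u <= (1 - hcl u)/2.
Proof.
move=> /andP[u0 u1].
rewrite /Order.min; case: ifP => h; last first.
  apply: half_ineq => //.
  by move/negbT: h; rewrite -leNgt.
have -> : hcl u = hcl (1 - u).
  have e : 1 - (1 - u) = u by ring.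
  by rewrite /hcl e (addrC ((1-u)^+2)); ring.
apply: half_ineq; first lra.
have e : 1 - (1 - u) = u by ring.
rewrite e; exact: ltW.
Qed.

Lemma fstar_eq (R : realType) (u : R) : 0 <= u <= 1 ->
  fSN2star u = Num.sqrt 2 / 4 * hcl u.
Proof.
move=> /andP[u0 u1]; rewrite /fSN2star /hcl.
case: ifP => // /andP[up ul].
rewrite /fSN2.
set v := 1 - u.
have v0 : 0 < v by rewrite /v; lra.
have un : u != 0 by rewrite gt_eqF.
set r := Num.sqrt u. set q := Num.sqrt v. set s2 := Num.sqrt (2:R).
set W := Num.sqrt (u^+2 + v^+2).
have r0 : 0 < r by rewrite sqrtr_gt0.
have s20 : 0 < s2 by rewrite sqrtr_gt0.
have rn : r != 0 by rewrite gt_eqF.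
have s2n : s2 != 0 by rewrite gt_eqF.
have eu : u = r^+2 by rewrite sqr_sqrtr //; lra.
have es : s2^+2 = 2 by rewrite sqr_sqrtr.
have es2 : s2^-1 = s2/2 by rewrite -[in RHS]es; field.
have A1 : Num.sqrt (((v/u)^+2 + 1)/2) = W * s2^-1 * u^-1.
  rewrite (_ : ((v/u)^+2 + 1)/2 = (u^+2+v^+2) * 2^-1 * (u^-1)^+2); last by field.
  rewrite sqrtrM; last by apply: mulr_ge0; [apply: addr_ge0; apply: sqr_ge0 | rewrite invr_ge0].
  rewrite sqrtrM; last by apply: addr_ge0; apply: sqr_ge0.
  rewrite sqrtr_sqr ger0_norm; last by rewrite invr_ge0; lra.
  by rewrite sqrtrV.
have A2 : Num.sqrt (v/u) = q * r^-1.
  by rewrite sqrtrM ?sqrtrV //; lra.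
have A3 : Num.sqrt ((v/u + 1)/2) = s2^-1 * r^-1.
  rewrite (_ : (v/u + 1)/2 = 2^-1 * u^-1); last by rewrite /v; field.
  by rewrite sqrtrM ?sqrtrV //; lra.
rewrite A1 A2 A3 es2.
rewrite !eu.
field; exact: rn.
Qed.

Local Open Scope classical_set_scope.

Lemma p_integ (d : measure_display) (T : measurableType d) (R : realType)
  (mu : {measure set T -> \bar R}) (p : T -> R)
  (p_meas : measurable_fun setT p) (p_ge0 : forall x, 0 <= p x)
  (p_int : (\int[mu]_x (p x)%:E = 1)%E) :
  mu.-integrable setT (EFin \o p).
Proof.
  apply/integrableP; split; first exact/measurable_EFinP.
  rewrite (eq_integral (fun x => (p x)%:E)); first by rewrite p_int ltry.
  by move=> x _ /=; rewrite ger0_norm.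
Qed.

Lemma bnd_int (d : measure_display) (T : measurableType d) (R : realType)
  (mu : {measure set T -> \bar R}) (p : T -> R)
  (p_meas : measurable_fun setT p) (p_ge0 : forall x, 0 <= p x)
  (p_int : (\int[mu]_x (p x)%:E = 1)%E) (h : T -> R) (B : R) :
  measurable_fun setT h -> (forall x, `|h x| <= B) ->
  mu.-integrable setT (fun x => (h x * p x)%:E).
Proof.
move=> mh hB.
have ip : mu.-integrable setT (EFin \o p).
  apply/integrableP; split; first exact/measurable_EFinP.
  rewrite (eq_integral (fun x => (p x)%:E)); first by rewrite p_int ltry.
  by move=> x _ /=; rewrite ger0_norm.
have -> : (fun x => (h x * p x)%:E) = ((EFin \o h) \* (EFin \o p))%E.
  by apply/funext => x; rewrite /= EFinM.
apply: integrableMr => //.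
exists B; split; first by rewrite num_real.
by move=> M BM x _ /=; apply: le_trans (hB x) (ltW BM).
Qed.

Lemma meas_sqrt (d : measure_display) (T : measurableType d) (R : realType) (f : T -> R) :
  measurable_fun setT f -> measurable_fun setT (fun x => Num.sqrt (f x)).
Proof.
move=> mf. exact: (measurableT_comp (continuous_measurable_fun (@sqrt_continuous R)) mf).
Qed.

Theorem mainTheorem2 (d : measure_display) (T : measurableType d) (R : realType)
  (mu : {measure set T -> \bar R}) (p : T -> R)
  (p_meas : measurable_fun setT p) (p_ge0 : forall x, 0 <= p x)
  (p_int : (\int[mu]_x (p x)%:E = 1)%E)
  (P1 P2 : T -> R)
  (P1_meas : measurable_fun setT P1) (P2_meas : measurable_fun setT P2)
  (P1_ge0 : forall x, 0 <= P1 x) (P2_ge0 : forall x, 0 <= P2 x)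
  (P12 : forall x, P1 x + P2 x = 1) :
  (EX mu p (fun x => Num.min (P1 x) (P2 x))
   <= (1 / 2)%:E * (1%:E - (4 / Num.sqrt 2)%:E * EX mu p (fun x => fSN2star (P2 x))))%E.
Proof.
have P2le : forall x, 0 <= P2 x <= 1.
  by move=> x; apply/andP; split => //; have := P12 x; have := P1_ge0 x; lra.
have eP1 : forall x, P1 x = 1 - P2 x by move=> x; have := P12 x; lra.
set s2 := Num.sqrt (2:R).
have s20 : 0 < s2 by rewrite sqrtr_gt0.
have s2le : s2 <= 2.
  rewrite -[2 in leRHS]ger0_norm // -sqrtr_sqr /s2; apply: ler_wsqrtr; lra.
have es : s2^+2 = 2 by rewrite sqr_sqrtr.
have hclB : forall u : R, 0 <= u <= 1 -> -4 <= hcl u <= 4.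
  move=> u /andP[u0 u1].
  have sq2 : forall t : R, 0 <= t <= 2 -> 0 <= Num.sqrt t <= 2.
    move=> t /andP[t0 t2]; rewrite sqrtr_ge0 /=.
    rewrite -[2 in leRHS]ger0_norm // -sqrtr_sqr; apply: ler_wsqrtr; lra.
  have h1 := sq2 (u^+2 + (1-u)^+2) ltac:(apply/andP; split; nra).
  have h2 := sq2 u ltac:(apply/andP; split; lra).
  have h3 := sq2 (1-u) ltac:(apply/andP; split; lra).
  move/andP: h1 => [? ?]; move/andP: h2 => [? ?]; move/andP: h3 => [? ?].
  rewrite /hcl; apply/andP; split; lra.
have fE : (fun x => fSN2star (P2 x)) = (fun x => s2 / 4 * hcl (P2 x)).
  by apply/funext => x; rewrite fstar_eq.
have mhcl : measurable_fun setT (fun x => hcl (P2 x)).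
  rewrite /hcl.
  apply: measurable_funB; first apply: measurable_funB.
  - apply: measurable_funM; first exact: measurable_cst.
    apply: meas_sqrt; apply: measurable_funD; first exact: measurable_funX.
    apply: measurable_funX; apply: measurable_funB => //; exact: measurable_cst.
  - exact: meas_sqrt.
  - apply: meas_sqrt; apply: measurable_funB => //; exact: measurable_cst.
have mf : measurable_fun setT (fun x => fSN2star (P2 x)).
  rewrite fE; apply: measurable_funM => //; exact: measurable_cst.
have fB : forall x, `|fSN2star (P2 x)| <= 2.
  move=> x; rewrite fstar_eq // -/s2 normrM.
  have := hclB _ (P2le x); move=> /andP[? ?].
  have : `|hcl (P2 x)| <= 4 by rewrite ler_norml; apply/andP; split.
  rewrite ger0_norm; last by apply: divr_ge0; lra.
  move=> hh; have := normr_ge0 (hcl (P2 x)); nra.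
have iG := bnd_int p_meas p_ge0 p_int mf fB.
have ip1 : mu.-integrable setT (fun x => ((1/2) * p x)%:E).
  apply: (@bnd_int _ _ _ mu p p_meas p_ge0 p_int (fun _ => 1/2) (1/2)).
    exact: measurable_cst.
  by move=> _; rewrite ger0_norm //; lra.
have mmin : measurable_fun setT (fun x => Num.min (P1 x) (P2 x)).
  exact: measurable_minr.
have minB : forall x, `|Num.min (P1 x) (P2 x)| <= 1.
  move=> x; rewrite /Order.min; have := P2le x; have := P1_ge0 x; have := eP1 x.
  case: ifP => _ ? ? /andP[? ?]; rewrite ger0_norm; lra.
have iF := bnd_int p_meas p_ge0 p_int mmin minB.
set c := 1/2 * (4 / s2).
have iCG : mu.-integrable setT (fun x => (c * (fSN2star (P2 x) * p x))%:E).
  under eq_fun do rewrite EFinM.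
  exact: integrableZl.
rewrite /EX.
have [g Hg] : exists g : R, (\int[mu]_x (fSN2star (P2 x) * p x)%:E)%E = g%:E.
  have := integrable_fin_num measurableT iG.
  by case: (\int[mu]_x _)%E => // g _; exists g.
rewrite Hg.
have -> : ((1 / 2)%:E * (1%:E - (4 / s2)%:E * g%:E))%E = ((1/2) * (1 - 4/s2 * g))%:E.
  by rewrite -[((4/s2)%:E * g%:E)%E]EFinM -EFinB -EFinM.
apply: (@le_trans _ _ (\int[mu]_x ((1/2 * p x)%:E - (c * (fSN2star (P2 x) * p x))%:E))%E).
  apply: le_integral => //.
    by apply: integrableB.
  move=> x _; rewrite -EFinB lee_fin.
  have := pt_ineq (P2le x); rewrite -eP1.
  rewrite fstar_eq // -/s2.
  move=> H.
  have hp := p_ge0 x.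
  have : Num.min (P1 x) (P2 x) * p x <= (1 - hcl (P2 x)) / 2 * p x by apply: ler_wpM2r.
  rewrite /c.
  have -> : 1 / 2 * p x - 1 / 2 * (4 / s2) * (s2 / 4 * hcl (P2 x) * p x) = (1 - hcl (P2 x)) / 2 * p x.
    by field; rewrite gt_eqF.
  done.
rewrite integralB_EFin //.
under eq_integral do rewrite EFinM.
rewrite integralZl; last exact: (p_integ p_meas p_ge0 p_int).
rewrite p_int.
under [X in (_ - X)%E]eq_integral do rewrite EFinM.
rewrite integralZl // Hg -!EFinM -EFinB lee_fin /c.
rewrite mulr1; rewrite le_eqVlt; apply/orP; left; apply/eqP; ring.
exact: measurableT.
Qed.
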